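(* For $x\in(0,1)$, the functions $f(k)=\sin\left(\frac{\pi}{2}x^k\right)^{1/k}$, $g(k)=\tan\left(\frac{\pi}{2}x^k\right)^{1/k}$ and $h(k)=\sinh(x^k)^{1/k}$ are decreasing on $(0,\infty)$. In particular, for $k\ge1$, $$\sqrt[k]{\sin\left(\tfrac{\pi}{2}x^k\right)}\le\sin\left(\tfrac{\pi}{2}x\right)\le\sin\left(\tfrac{\pi}{2}\sqrt[k]{x}\right)^k,\qquad \sqrt[k]{\tan\left(\tfrac{\pi}{2}x^k\right)}\le\tan\left(\tfrac{\pi}{2}x\right)\le\tan\left(\tfrac{\pi}{2}\sqrt[k]{x}\right)^k,$$ $$\sqrt[k]{\sinh(x^k)}\le\sinh(x)\le\sinh(\sqrt[k]{x})^k.$$ *)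

(* Defs.v *)
From Stdlib Require Export Reals.
Open Scope R_scope.

Definition rpow (a b : R) : R := Rpower a b.

Definition f_sin (x k : R) : R := rpow (sin (PI / 2 * rpow x k)) (1 / k).
Definition g_tan (x k : R) : R := rpow (tan (PI / 2 * rpow x k)) (1 / k).
Definition h_sinh (x k : R) : R := rpow (sinh (rpow x k)) (1 / k).

Definition strict_decr_pos (F : R -> R) : Prop :=
  forall a b, 0 < a -> a < b -> F b < F a.

(* Main.v *)
Require Import Defs.
From Stdlib Require Import Reals Lra.
From Coquelicot Require Import Coquelicot.
Open Scope R_scope.

Lemma cont_of_derive (f : R -> R) (df x : R) : is_derive f x df -> continuity_pt f x.
Proof.
  intro H. apply continuity_pt_filterlim.
  apply (ex_derive_continuous (K:=R_AbsRing) f x). exists df; exact H.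
Qed.

Lemma incr_closed (f df : R -> R) a b : a < b ->
  (forall x, a <= x <= b -> is_derive f x (df x)) ->
  (forall x, a <= x <= b -> 0 <= df x) ->
  (forall x, a < x < b -> 0 < df x) -> f a < f b.
Proof.
  intros Hab Hd H0 H1.
  set (m1 := (2*a+b)/3). set (m2 := (a+2*b)/3).
  assert (E1 : f a <= f m1).
  { destruct (MVT_gen f a m1 df) as [c [Hc Hc2]].
    - intros x Hx. rewrite Rmin_left in Hx by (unfold m1; lra).
      rewrite Rmax_right in Hx by (unfold m1; lra). apply Hd. unfold m1 in Hx; lra.
    - intros x Hx. rewrite Rmin_left in Hx by (unfold m1; lra).
      rewrite Rmax_right in Hx by (unfold m1; lra).
      apply cont_of_derive with (df x). apply Hd. unfold m1 in Hx; lra.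
    - rewrite Rmin_left in Hc by (unfold m1; lra).
      rewrite Rmax_right in Hc by (unfold m1; lra).
      assert (0 <= df c) by (apply H0; unfold m1 in Hc; lra).
      assert (0 <= df c * (m1 - a)) by (apply Rmult_le_pos; unfold m1; lra).
      lra. }
  assert (E3 : f m2 <= f b).
  { destruct (MVT_gen f m2 b df) as [c [Hc Hc2]].
    - intros x Hx. rewrite Rmin_left in Hx by (unfold m2; lra).
      rewrite Rmax_right in Hx by (unfold m2; lra). apply Hd. unfold m2 in Hx; lra.
    - intros x Hx. rewrite Rmin_left in Hx by (unfold m2; lra).
      rewrite Rmax_right in Hx by (unfold m2; lra).
      apply cont_of_derive with (df x). apply Hd. unfold m2 in Hx; lra.
    - rewrite Rmin_left in Hc by (unfold m2; lra).
      rewrite Rmax_right in Hc by (unfold m2; lra).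
      assert (0 <= df c) by (apply H0; unfold m2 in Hc; lra).
      assert (0 <= df c * (b - m2)) by (apply Rmult_le_pos; unfold m2; lra).
      lra. }
  assert (E2 : f m1 < f m2).
  { apply (incr_function f (Finite a) (Finite b) df).
    - intros x Ha Hb. apply Hd. simpl in *; lra.
    - intros x Ha Hb. apply H1. simpl in *; lra.
    - simpl; unfold m1; lra.
    - unfold m1, m2; lra.
    - simpl; unfold m2; lra. }
  lra.
Qed.

Lemma cos_pos_w w : 0 <= w -> w < PI/2 -> 0 < cos w.
Proof. intros. apply cos_gt_0; pose proof PI_RGT_0; lra. Qed.

Lemma sin_pos_w w : 0 < w -> w <= PI/2 -> 0 < sin w.
Proof. intros. apply sin_gt_0; pose proof PI_RGT_0; lra. Qed.

Lemma tan_ratio a b : 0 < a -> a < b -> b < PI/2 -> tan a / a < tan b / b.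
Proof.
  intros Ha Hab Hb.
  apply (incr_function (fun w => tan w / w) (Finite 0) (Finite (PI/2))
     (fun w => ((tan w ^ 2 + 1) * w - tan w * 1) / w ^ 2)); try (simpl; lra).
  - intros x H1 H2; simpl in H1, H2. apply (is_derive_div tan (fun w => w)).
    + apply is_derive_tan. apply Rgt_not_eq. apply cos_pos_w; lra.
    + apply (is_derive_id (K:=R_AbsRing)).
    + lra.
  - intros x H1 H2; simpl in H1, H2.
    assert (Hc : 0 < cos x) by (apply cos_pos_w; lra).
    assert (Hs : sin (2*x) < 2*x) by (apply sin_lt_x; lra).
    rewrite sin_2a in Hs.
    apply Rdiv_lt_0_compat; [|apply pow_lt; lra].
    unfold tan.
    assert (Hsc : sin x ^ 2 + cos x ^ 2 = 1).
    { rewrite <- !Rsqr_pow2. apply sin2_cos2. }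
    assert (E : ((sin x / cos x) ^ 2 + 1) * x - sin x / cos x * 1 =
               (x * (sin x ^ 2 + cos x ^ 2) - sin x * cos x) / (cos x ^ 2)).
    { field. lra. }
    rewrite E, Hsc.
    apply Rdiv_lt_0_compat; [lra | apply pow_lt; lra].
Qed.

Lemma tan_gt_id w : 0 < w -> w < PI/2 -> w < tan w.
Proof.
  intros H1 H2.
  assert (tan 0 - 0 < tan w - w); [|rewrite tan_0 in H; lra].
  apply (incr_closed (fun w => tan w - w) (fun w => tan w ^ 2)); try lra.
  - intros x Hx. replace (tan x ^ 2) with ((tan x ^2 + 1) - 1) by ring.
    apply (is_derive_minus tan (fun w => w)).
    + apply is_derive_tan. apply Rgt_not_eq. apply cos_pos_w; lra.
    + apply (is_derive_id (K:=R_AbsRing)).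
  - intros; apply pow2_ge_0.
  - intros x Hx. assert (0 < tan x) by (apply tan_gt_0; lra). nra.
Qed.

Definition P (w : R) := w * cos w / sin w.

Lemma P_decr w1 w2 : 0 < w1 -> w1 < w2 -> w2 <= PI/2 -> P w2 < P w1.
Proof.
  intros H1 H2 H3. unfold P.
  assert (Hc1 : 0 < cos w1) by (apply cos_pos_w; lra).
  assert (Hs1 : 0 < sin w1) by (apply sin_pos_w; lra).
  destruct (Req_dec w2 (PI/2)) as [E|E].
  - rewrite E, cos_PI2. replace (PI / 2 * 0 / sin (PI / 2)) with 0 by (field; rewrite sin_PI2; lra).
    apply Rdiv_lt_0_compat; nra.
  - assert (Hc2 : 0 < cos w2) by (apply cos_pos_w; lra).
    assert (Hs2 : 0 < sin w2) by (apply sin_pos_w; lra).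
    assert (T := tan_ratio w1 w2 H1 H2 ltac:(lra)).
    unfold tan in T.
    replace (w1 * cos w1 / sin w1) with (/ (sin w1 / cos w1 / w1)) by (field; lra).
    replace (w2 * cos w2 / sin w2) with (/ (sin w2 / cos w2 / w2)) by (field; lra).
    apply Rinv_lt_contravar; [|exact T].
    apply Rmult_lt_0_compat; repeat apply Rdiv_lt_0_compat; lra.
Qed.

Lemma sinh_pos v : 0 < v -> 0 < sinh v.
Proof. intro. rewrite <- sinh_0. now apply sinh_lt. Qed.

Lemma is_derive_sinh v : is_derive sinh v (cosh v).
Proof. apply is_derive_Reals, derivable_pt_lim_sinh. Qed.
Lemma is_derive_cosh v : is_derive cosh v (sinh v).
Proof. apply is_derive_Reals, derivable_pt_lim_cosh. Qed.

Lemma cosh_gt1 v : 0 < v -> 1 < cosh v.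
Proof.
  intro H. unfold cosh.
  assert (E : exp v * exp (- v) = 1) by (rewrite <- exp_plus; replace (v + - v) with 0 by ring; apply exp_0).
  assert (1 < exp v) by (rewrite <- exp_0; apply exp_increasing; lra).
  assert (0 < exp (-v)) by apply exp_pos.
  nra.
Qed.

Lemma sinh_gt_id v : 0 < v -> v < sinh v.
Proof.
  intro H. assert (sinh 0 - 0 < sinh v - v); [|rewrite sinh_0 in H0; lra].
  apply (incr_closed (fun w => sinh w - w) (fun w => cosh w - 1)); try lra.
  - intros x _. apply (is_derive_minus sinh (fun w => w)).
    + apply is_derive_sinh.
    + apply (is_derive_id (K:=R_AbsRing)).
  - intros x Hx. destruct (Req_dec x 0) as [->|]. rewrite cosh_0; lra.
    assert (1 < cosh x) by (apply cosh_gt1; lra). lra.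
  - intros x Hx. assert (1 < cosh x) by (apply cosh_gt1; lra). lra.
Qed.

Lemma sinh_lt_vcosh v : 0 < v -> sinh v < v * cosh v.
Proof.
  intro H. assert (0 * cosh 0 - sinh 0 < v * cosh v - sinh v); [|rewrite sinh_0 in H0; lra].
  apply (incr_closed (fun w => w * cosh w - sinh w) (fun w => w * sinh w)); try lra.
  - intros x _. replace (x * sinh x) with ((1 * cosh x + x * sinh x) - cosh x) by ring.
    apply (is_derive_minus (fun w => w * cosh w) sinh).
    + apply (is_derive_mult (fun w => w) cosh).
      * apply (is_derive_id (K:=R_AbsRing)).
      * apply is_derive_cosh.
      * intros; apply Rmult_comm.
    + apply is_derive_sinh.
  - intros x Hx. destruct (Req_dec x 0) as [->|]. lra.
    assert (0 < sinh x) by (apply sinh_pos; lra). nra.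
  - intros x Hx. assert (0 < sinh x) by (apply sinh_pos; lra). nra.
Qed.

Lemma sinh_ratio a b : 0 < a -> a < b -> sinh a / a < sinh b / b.
Proof.
  intros Ha Hab.
  apply (incr_function (fun w => sinh w / w) (Finite 0) p_infty
     (fun w => (cosh w * w - sinh w * 1) / w ^ 2)); try (simpl; lra); try easy.
  - intros x H1 H2; simpl in H1. apply (is_derive_div sinh (fun w => w)).
    + apply is_derive_sinh.
    + apply (is_derive_id (K:=R_AbsRing)).
    + lra.
  - intros x H1 H2; simpl in H1.
    assert (sinh x < x * cosh x) by (apply sinh_lt_vcosh; lra).
    apply Rdiv_lt_0_compat; [lra | apply pow_lt; lra].
Qed.

Lemma exp_lt1 s : s < 0 -> exp s < 1.
Proof. intro. rewrite <- exp_0. now apply exp_increasing. Qed.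

Lemma key_tan u a b : u < 0 -> 0 < a -> a < b ->
  a * ln (tan (PI/2*exp (b*u))) < b * ln (tan (PI/2*exp (a*u))).
Proof.
  intros Hu Ha Hab.
  assert (Hpi := PI2_3_2).
  assert (Hbu : b*u < a*u) by nra.
  assert (Hau : a*u < 0) by nra.
  set (s1 := b*u) in *. set (s2 := a*u) in *.
  assert (E : forall s, s < 0 -> ln (tan (PI/2*exp s)) = ln (PI/2) + s + ln (tan (PI/2*exp s) / (PI/2*exp s))).
  { intros s Hs. assert (0 < exp s) by apply exp_pos.
    assert (0 < tan (PI/2*exp s)) by (apply tan_gt_0; assert (exp s < 1) by (apply exp_lt1; lra); nra).
    replace (tan (PI/2*exp s)) with ((PI/2) * exp s * (tan (PI/2*exp s) / (PI/2*exp s))) at 1 by (field; lra).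
    rewrite !ln_mult, ln_exp; try lra; try apply Rdiv_lt_0_compat; nra. }
  rewrite !E by lra.
  assert (H1 := exp_pos s1). assert (H2 := exp_lt1 s2 Hau).
  assert (H3 : exp s1 < exp s2) by (apply exp_increasing; lra).
  assert (T1 := tan_ratio (PI/2*exp s1) (PI/2*exp s2) ltac:(nra) ltac:(nra) ltac:(nra)).
  assert (T2 := tan_gt_id (PI/2*exp s2) ltac:(nra) ltac:(nra)).
  set (w1 := PI/2*exp s1) in *. set (w2 := PI/2*exp s2) in *.
  assert (L1 : ln (tan w1 / w1) < ln (tan w2 / w2)).
  { apply ln_increasing; auto. apply Rdiv_lt_0_compat. apply tan_gt_0; unfold w1; nra. unfold w1; nra. }
  assert (L2 : 0 < ln (tan w2 / w2)).
  { rewrite <- ln_1. apply ln_increasing; try lra. apply (Rmult_lt_reg_r w2). unfold w2; nra.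
    unfold Rdiv. rewrite Rmult_assoc, Rinv_l; unfold w2 in *; nra. }
  assert (L3 : 0 < ln (PI/2)) by (rewrite <- ln_1; apply ln_increasing; lra).
  unfold s1, s2. nra.
Qed.

Lemma key_sinh u a b : u < 0 -> 0 < a -> a < b ->
  a * ln (sinh (exp (b*u))) < b * ln (sinh (exp (a*u))).
Proof.
  intros Hu Ha Hab.
  assert (Hbu : b*u < a*u) by nra.
  assert (Hau : a*u < 0) by nra.
  set (s1 := b*u) in *. set (s2 := a*u) in *.
  assert (E : forall s, ln (sinh (exp s)) = s + ln (sinh (exp s) / exp s)).
  { intros s. assert (0 < exp s) by apply exp_pos.
    assert (0 < sinh (exp s)) by (apply sinh_pos; lra).
    replace (sinh (exp s)) with (exp s * (sinh (exp s) / exp s)) at 1 by (field; lra).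
    rewrite !ln_mult, ln_exp; try lra; try apply Rdiv_lt_0_compat; nra. }
  rewrite !E.
  assert (H1 := exp_pos s1). assert (H2 := exp_lt1 s2 Hau).
  assert (H3 : exp s1 < exp s2) by (apply exp_increasing; lra).
  assert (T1 := sinh_ratio (exp s1) (exp s2) H1 H3).
  assert (T2 := sinh_gt_id (exp s2) ltac:(lra)).
  set (w1 := exp s1) in *. set (w2 := exp s2) in *.
  assert (L1 : ln (sinh w1 / w1) < ln (sinh w2 / w2)).
  { apply ln_increasing; auto. apply Rdiv_lt_0_compat; auto. apply sinh_pos; lra. }
  assert (L2 : 0 < ln (sinh w2 / w2)).
  { rewrite <- ln_1. apply ln_increasing; try lra. apply (Rmult_lt_reg_r w2). lra.
    unfold Rdiv. rewrite Rmult_assoc, Rinv_l; nra. }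
  unfold s1, s2. nra.
Qed.

Definition Ls s := ln (sin (PI/2*exp s)).
Definition dLs s := P (PI/2*exp s).

Lemma w_bounds s : s <= 0 -> 0 < PI/2*exp s <= PI/2.
Proof.
  intro. assert (Hpi := PI2_3_2). assert (0 < exp s) by apply exp_pos.
  assert (exp s <= 1). { destruct (Req_dec s 0) as [->|]. rewrite exp_0; lra. left; apply exp_lt1; lra. }
  nra.
Qed.

Lemma Q_derive m s : s <= 0 -> is_derive (fun s => Ls s - m*s) s (dLs s - m).
Proof.
  intro Hs. destruct (w_bounds s Hs). unfold Ls, dLs, P. auto_derive.
  - apply sin_pos_w; lra.
  - assert (0 < sin (PI/2*exp s)) by (apply sin_pos_w; lra). field. lra.
Qed.

Lemma Qn_derive m s : s <= 0 -> is_derive (fun s => - (Ls s - m*s)) s (m - dLs s).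
Proof.
  intro Hs. destruct (w_bounds s Hs). unfold Ls, dLs, P. auto_derive.
  - apply sin_pos_w; lra.
  - assert (0 < sin (PI/2*exp s)) by (apply sin_pos_w; lra). field. lra.
Qed.

Lemma dLs_decr s s' : s < s' -> s' <= 0 -> dLs s' < dLs s.
Proof.
  intros H1 H2. unfold dLs. destruct (w_bounds s') as [A1 A2]; auto.
  destruct (w_bounds s) as [B1 B2]; try lra.
  apply P_decr; auto.
  assert (exp s < exp s') by (apply exp_increasing; lra).
  assert (Hpi := PI2_3_2). nra.
Qed.

Lemma key_sin u a b : u < 0 -> 0 < a -> a < b -> a * Ls (b*u) < b * Ls (a*u).
Proof.
  intros Hu Ha Hab.
  assert (Hbu : b*u < a*u) by nra.
  assert (Hau : a*u < 0) by nra.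
  set (s1 := b*u) in *. set (t := a*u) in *.
  set (m := dLs t).
  assert (Q1 : Ls s1 - m*s1 < Ls t - m*t).
  { apply (incr_closed (fun s => Ls s - m*s) (fun s => dLs s - m)); auto.
    - intros x Hx. apply Q_derive. lra.
    - intros x Hx. destruct (Req_dec x t) as [->|]. unfold m; lra.
      assert (dLs t < dLs x) by (apply dLs_decr; lra). unfold m; lra.
    - intros x Hx. assert (dLs t < dLs x) by (apply dLs_decr; lra). unfold m; lra. }
  assert (Q2 : - (Ls t - m*t) < - (Ls 0 - m*0)).
  { apply (incr_closed (fun s => - (Ls s - m*s)) (fun s => m - dLs s)); auto.
    - intros x Hx. apply Qn_derive. lra.
    - intros x Hx. destruct (Req_dec x t) as [->|]. unfold m; lra.
      assert (dLs x < dLs t) by (apply dLs_decr; lra). unfold m; lra.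
    - intros x Hx. assert (dLs x < dLs t) by (apply dLs_decr; lra). unfold m; lra. }
  assert (L0 : Ls 0 = 0).
  { unfold Ls. rewrite exp_0, Rmult_1_r, sin_PI2. apply ln_1. }
  rewrite L0 in Q2.
  unfold s1, t in *. nra.
Qed.

Lemma decr_gen (G : R -> R) u : (forall a b, 0<a -> a<b -> a * G(b*u) < b * G(a*u)) ->
  forall a b, 0<a -> a<b -> exp (1/b * G(b*u)) < exp (1/a * G(a*u)).
Proof.
  intros H a b Ha Hab. apply exp_increasing.
  specialize (H a b Ha Hab).
  replace (1/b * G(b*u)) with ((a * G(b*u)) * / (a*b)) by (field; lra).
  replace (1/a * G(a*u)) with ((b * G(a*u)) * / (a*b)) by (field; lra).
  apply Rmult_lt_compat_r; auto. apply Rinv_0_lt_compat; nra.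
Qed.

Lemma decr_k (F : R -> R) : strict_decr_pos F -> forall k, 1 <= k -> F k <= F 1 /\ F 1 <= F (1/k).
Proof.
  intros H k Hk. split.
  - destruct (Req_dec k 1) as [->|]. lra. left; apply H; lra.
  - destruct (Req_dec k 1) as [->|]. replace (1/1) with 1 by field; lra.
    left; apply H. apply Rdiv_lt_0_compat; lra.
    apply (Rmult_lt_reg_r k); try lra. field_simplify; lra.
Qed.

Theorem lemma4p10 (x : R) (hx0 : 0 < x) (hx1 : x < 1) :
  strict_decr_pos (f_sin x) /\ strict_decr_pos (g_tan x) /\ strict_decr_pos (h_sinh x) /\
  (forall k : R, 1 <= k ->
     rpow (sin (PI / 2 * rpow x k)) (1 / k) <= sin (PI / 2 * x) /\
     sin (PI / 2 * x) <= rpow (sin (PI / 2 * rpow x (1 / k))) k /\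
     rpow (tan (PI / 2 * rpow x k)) (1 / k) <= tan (PI / 2 * x) /\
     tan (PI / 2 * x) <= rpow (tan (PI / 2 * rpow x (1 / k))) k /\
     rpow (sinh (rpow x k)) (1 / k) <= sinh x /\
     sinh x <= rpow (sinh (rpow x (1 / k))) k).
Proof.
  assert (Hu : ln x < 0) by (rewrite <- ln_1; apply ln_increasing; lra).
  assert (D1 : strict_decr_pos (f_sin x)).
  { intros a b Ha Hab.
    exact (decr_gen Ls (ln x) (fun a b Ha Hab => key_sin (ln x) a b Hu Ha Hab) a b Ha Hab). }
  assert (D2 : strict_decr_pos (g_tan x)).
  { intros a b Ha Hab.
    exact (decr_gen (fun s => ln (tan (PI/2*exp s))) (ln x) (fun a b Ha Hab => key_tan (ln x) a b Hu Ha Hab) a b Ha Hab). }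
  assert (D3 : strict_decr_pos (h_sinh x)).
  { intros a b Ha Hab.
    exact (decr_gen (fun s => ln (sinh (exp s))) (ln x) (fun a b Ha Hab => key_sinh (ln x) a b Hu Ha Hab) a b Ha Hab). }
  split; [exact D1|]. split; [exact D2|]. split; [exact D3|].
  intros k Hk.
  assert (Hpi := PI2_3_2).
  assert (Ek : 1 / (1 / k) = k) by (field; lra).
  assert (R1 : rpow x 1 = x) by (apply Rpower_1; lra).
  assert (E11 : 1 / 1 = 1) by field.
  assert (Ss : 0 < sin (PI/2*x)) by (apply sin_pos_w; nra).
  assert (St : 0 < tan (PI/2*x)) by (apply tan_gt_0; nra).
  assert (Sh : 0 < sinh x) by (apply sinh_pos; lra).
  destruct (decr_k _ D1 k Hk) as [A1 A2].
  destruct (decr_k _ D2 k Hk) as [B1 B2].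
  destruct (decr_k _ D3 k Hk) as [C1 C2].
  unfold f_sin, g_tan, h_sinh in *.
  rewrite Ek, R1, E11 in *.
  unfold rpow in A1, B1, C1, A2, B2, C2.
  rewrite !Rpower_1 in A1, A2, B1, B2, C1, C2 by assumption.
  unfold rpow. repeat split; assumption.
Qed.
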